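(* If $\dot\Sigma^*/{\dot\sim_{\mathrm{REL}_{\ge 5}}}$ is finite, then $\mathbf{T}^{\{\cap,\cdot,\mathrm{I},\mathrm{D}\}}_{\le 1}/{\sim_{\mathrm{REL}}}$ is finite.
   Context: Fix a non-empty finite set $V$ of variables. Consider CoR terms over the operations $\cap$ (binary), $\cdot$ (binary), constants $\mathrm{I},\mathrm{D}$ and converse $\smile$ (unary), interpreted in a structure $M$ (a non-empty set $|M|$ with a binary relation $a^M\subseteq|M|^2$ for each $a\in V$) by $[\![a]\!]_M=a^M$, $\cap$ as intersection, $[\![\mathrm{I}]\!]_M=\{(x,y):x=y\}$, $[\![\mathrm{D}]\!]_M=\{(x,y):x\ne y\}$, $R\cdot S=\{(x,y):\exists z,(x,z)\in R\wedge(z,y)\in S\}$, $R^{\smile}=\{(x,y):(y,x)\in R\}$. $\mathbf{T}^{\{\cap,\cdot,\mathrm{I},\mathrm{D}\}}$ is the set of such terms not using $\smile$; $\mathrm{vo}(t)$ is the number of occurrences of variables in $t$, and $S_{\le k}=\{t\in S:\mathrm{vo}(t)\le k\}$. For a class $\mathcal{C}$ of structures, $t\sim_{\mathcal{C}}s$ iff $[\![t]\!]_M=[\![s]\!]_M$ for all $M\in\mathcal{C}$; $\mathrm{REL}$ is the class of all structures and $\mathrm{REL}_{\ge 5}$ those with at least $5$ elements. $\dot\Sigma$ is the set of characters $(\_\cap t)$, $(t\cap\_)$, $(\_\cdot t)$, $(t\cdot\_)$ for all variable-free terms $t$ over $\{\cap,\cdot,\mathrm{I},\mathrm{D},\smile\}$,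 together with the character $\smile$. For $w\in\dot\Sigma^*$ and a term $t$, $w[t]$ is defined by $\varepsilon[t]=t$, $((\_\cap s)w')[t]=w'[t]\cap s$, $((s\cap\_)w')[t]=s\cap w'[t]$, $((\_\cdot s)w')[t]=w'[t]\cdot s$, $((s\cdot\_)w')[t]=s\cdot w'[t]$, $(\smile w')[t]=(w'[t])^{\smile}$. $w\ \dot\sim_{\mathrm{REL}_{\ge5}}\ w'$ iff $w[a]\sim_{\mathrm{REL}_{\ge 5}}w'[a]$ for any variable $a\in V$. *)

(* Defs.v *)
From Stdlib Require Import List.
Import ListNotations.

Section Defs.
Variable V : Type.

Inductive term : Type :=
| Var  : V -> term
| Cap  : term -> term -> term
| Comp : term -> term -> term
| IdT  : term
| DiT  : term
| Conv : term -> term.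

Record structure : Type := {
  carrier : Type;
  carrier_inhabited : inhabited carrier;
  rel : V -> carrier -> carrier -> Prop }.

Fixpoint sem (M : structure) (t : term) : carrier M -> carrier M -> Prop :=
  match t with
  | Var a => rel M a
  | Cap t1 t2 => fun x y => sem M t1 x y /\ sem M t2 x y
  | Comp t1 t2 => fun x y => exists z, sem M t1 x z /\ sem M t2 z y
  | IdT => fun x y => x = y
  | DiT => fun x y => x <> y
  | Conv t1 => fun x y => sem M t1 y x
  end.

Definition sim (C : structure -> Prop) (t s : term) : Prop :=
  forall M, C M -> forall x y, sem M t x y <-> sem M s x y.

Definition REL (M : structure) : Prop := True.

Definition REL_ge5 (M : structure) : Prop :=
  exists l : list (carrier M), length l = 5 /\ NoDup l.

Fixpoint vo (t : term) : nat :=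
  match t with
  | Var _ => 1
  | Cap t1 t2 | Comp t1 t2 => vo t1 + vo t2
  | IdT | DiT => 0
  | Conv t1 => vo t1
  end.

Fixpoint var_free (t : term) : Prop :=
  match t with
  | Var _ => False
  | Cap t1 t2 | Comp t1 t2 => var_free t1 /\ var_free t2
  | IdT | DiT => True
  | Conv t1 => var_free t1
  end.

Fixpoint conv_free (t : term) : Prop :=
  match t with
  | Var _ | IdT | DiT => True
  | Cap t1 t2 | Comp t1 t2 => conv_free t1 /\ conv_free t2
  | Conv _ => False
  end.

(* characters of Sigma-dot: (_ cap t), (t cap _), (_ . t), (t . _), converse *)
Inductive char : Type :=
| CapR  : term -> char
| CapL  : term -> char
| CompR : term -> char
| CompL : term -> char
| ConvC : char.

(* a character belongs to Sigma-dot iff its embedded term is variable-free *)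
Definition char_ok (c : char) : Prop :=
  match c with
  | CapR t | CapL t | CompR t | CompL t => var_free t
  | ConvC => True
  end.

Definition word_ok (w : list char) : Prop := Forall char_ok w.

Fixpoint plug (w : list char) (t : term) : term :=
  match w with
  | [] => t
  | CapR s :: w' => Cap (plug w' t) s
  | CapL s :: w' => Cap s (plug w' t)
  | CompR s :: w' => Comp (plug w' t) s
  | CompL s :: w' => Comp s (plug w' t)
  | ConvC :: w' => Conv (plug w' t)
  end.

Definition wsim_ge5 (w w' : list char) : Prop :=
  forall a : V, sim REL_ge5 (plug w (Var a)) (plug w' (Var a)).

(* the quotient of {x | P x} by R is finite:
   finitely many representatives in P cover every element of P up to R *)
Definition finite_quotient {X : Type} (P : X -> Prop) (R : X -> X -> Prop) : Prop :=
  exists reps : list X, Forall P reps /\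
    forall x, P x -> exists r, In r reps /\ R x r.

End Defs.

Arguments Var {V}. Arguments Cap {V}. Arguments Comp {V}. Arguments IdT {V}.
Arguments DiT {V}. Arguments Conv {V}. Arguments ConvC {V}.

(* Main.v *)
Require Import Defs.
From Stdlib Require Import List.
From Stdlib Require Import Arith Lia Classical Bool.
Import ListNotations.

Arguments carrier {V}. Arguments rel {V}. Arguments sem {V}. Arguments plug {V}.
Arguments vo {V}. Arguments var_free {V}. Arguments conv_free {V}.
Arguments word_ok {V}. Arguments char_ok {V}. Arguments sim {V}.
Arguments CapR {V}. Arguments CapL {V}. Arguments CompR {V}. Arguments CompL {V}.
Arguments REL_ge5 {V}. Arguments REL {V}. Arguments wsim_ge5 {V}.

Lemma finite_choice {X} (P : X -> Prop) (G : list (X -> Prop)) :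
  exists reps, Forall P reps /\
    forall g, In g G -> (exists x, P x /\ g x) -> exists r, In r reps /\ g r.
Proof.
  induction G as [|g G IH].
  - exists []. split; [constructor| intros g []].
  - destruct IH as [reps [HP H]].
    destruct (classic (exists x, P x /\ g x)) as [[x [Px gx]]|Hn].
    + exists (x :: reps). split; [constructor; auto|].
      intros g' [<-|Hg] Hex.
      * exists x; split; [left|]; auto.
      * destruct (H g' Hg Hex) as [r [Hr gr]]. exists r; split; [right|]; auto.
    + exists reps. split; auto.
      intros g' [<-|Hg] Hex; [contradiction|]. auto.
Qed.

Definition agree {X} (L : list (X -> Prop)) (x y : X) :=
  forall Q, In Q L -> (Q x <-> Q y).

Lemma tests_aux {X} (P : X -> Prop) (L : list (X -> Prop)) :
  exists reps, Forall P reps /\ forall x, P x -> exists r, In r reps /\ agree L x r.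
Proof.
  induction L as [|Q L IH].
  - destruct (classic (exists x, P x)) as [[x Px]|Hn].
    + exists [x]. split; [constructor; auto|].
      intros y Py. exists x. split; [left; auto|]. intros Q [].
    + exists []. split; [constructor|]. intros y Py. exfalso; eauto.
  - destruct IH as [rs [Hrs Hcov]].
    destruct (finite_choice P (flat_map (fun r => [fun x => agree L x r /\ Q x;
                                                  fun x => agree L x r /\ ~ Q x]) rs))
      as [reps [HP H]].
    exists reps. split; auto.
    intros x Px. destruct (Hcov x Px) as [r [Hr Hxr]].
    destruct (classic (Q x)) as [Qx|nQx].
    + destruct (H (fun x => agree L x r /\ Q x)) as [r' [Hr' [Hag Qr']]].
      * apply in_flat_map. exists r. split; auto. left; auto.
      * exists x; auto.
      * exists r'. split; auto. intros Q' [<-|HQ']; [tauto|].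
        rewrite (Hxr Q' HQ'), (Hag Q' HQ'). tauto.
    + destruct (H (fun x => agree L x r /\ ~ Q x)) as [r' [Hr' [Hag Qr']]].
      * apply in_flat_map. exists r. split; auto. right; left; auto.
      * exists x; auto.
      * exists r'. split; auto. intros Q' [<-|HQ']; [tauto|].
        rewrite (Hxr Q' HQ'), (Hag Q' HQ'). tauto.
Qed.

Lemma tests_fin {X} (P : X -> Prop) (R : X -> X -> Prop) (L : list (X -> Prop)) :
  (forall x y, P x -> P y -> agree L x y -> R x y) -> finite_quotient P R.
Proof.
  intros H. destruct (tests_aux P L) as [reps [HP Hc]].
  exists reps. split; auto. intros x Px.
  destruct (Hc x Px) as [r [Hr Ha]]. exists r. split; auto.
  apply H; auto. rewrite Forall_forall in HP; auto.
Qed.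

Section T.
Variable V : Type.

Fixpoint occurs (b : V) (t : term V) : Prop :=
  match t with
  | Var c => c = b
  | Cap t1 t2 | Comp t1 t2 => occurs b t1 \/ occurs b t2
  | IdT | DiT => False
  | Conv t1 => occurs b t1
  end.

Lemma occ_vo b (t : term V) : occurs b t -> 1 <= vo t.
Proof. induction t; simpl; intuition lia. Qed.

Lemma vo_occ (t : term V) : 1 <= vo t -> exists b, occurs b t.
Proof.
  induction t; simpl; intros H; try lia.
  - eauto.
  - destruct (Nat.eq_dec (vo t1) 0).
    + destruct IHt2 as [b Hb]; [lia|]. eauto.
    + destruct IHt1 as [b Hb]; [lia|]. eauto.
  - destruct (Nat.eq_dec (vo t1) 0).
    + destruct IHt2 as [b Hb]; [lia|]. eauto.
    + destruct IHt1 as [b Hb]; [lia|]. eauto.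
  - auto.
Qed.

Lemma occ_uniq a b (t : term V) : vo t <= 1 -> occurs a t -> occurs b t -> a = b.
Proof.
  induction t; simpl; intros Hv Ha Hb; try contradiction.
  - congruence.
  - destruct Ha as [Ha|Ha]; destruct Hb as [Hb|Hb].
    + apply IHt1; auto; lia.
    + apply occ_vo in Ha; apply occ_vo in Hb; lia.
    + apply occ_vo in Ha; apply occ_vo in Hb; lia.
    + apply IHt2; auto; lia.
  - destruct Ha as [Ha|Ha]; destruct Hb as [Hb|Hb].
    + apply IHt1; auto; lia.
    + apply occ_vo in Ha; apply occ_vo in Hb; lia.
    + apply occ_vo in Ha; apply occ_vo in Hb; lia.
    + apply IHt2; auto; lia.
  - auto.
Qed.

Lemma vo0_vf (t : term V) : vo t = 0 -> var_free t.
Proof. induction t; simpl; intros; try tauto; try lia; split; (apply IHt1 || apply IHt2); lia. Qed.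

Lemma decomp (t : term V) : conv_free t -> vo t = 1 ->
  exists w a, word_ok w /\ t = plug w (Var a).
Proof.
  induction t; simpl; intros Hc Hv; try lia; try contradiction.
  - exists [], v. split; [constructor|reflexivity].
  - destruct Hc as [H1 H2]. destruct (Nat.eq_dec (vo t1) 0).
    + destruct IHt2 as [w [a [Hw ->]]]; auto; [lia|].
      exists (CapL t1 :: w), a. split; [constructor; auto; simpl; apply vo0_vf; auto|reflexivity].
    + destruct IHt1 as [w [a [Hw ->]]]; auto; [lia|].
      exists (CapR t2 :: w), a. split; [constructor; auto; simpl; apply vo0_vf; lia|reflexivity].
  - destruct Hc as [H1 H2]. destruct (Nat.eq_dec (vo t1) 0).
    + destruct IHt2 as [w [a [Hw ->]]]; auto; [lia|].
      exists (CompL t1 :: w), a. split; [constructor; auto; simpl; apply vo0_vf; auto|reflexivity].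
    + destruct IHt1 as [w [a [Hw ->]]]; auto; [lia|].
      exists (CompR t2 :: w), a. split; [constructor; auto; simpl; apply vo0_vf; lia|reflexivity].
Qed.

(* abstract semantics of variable-free terms on structures with >= 3 elements *)
Fixpoint absem (t : term V) : bool * bool :=
  match t with
  | Var _ => (false, false)
  | Cap t1 t2 => let (i1, d1) := absem t1 in let (i2, d2) := absem t2 in
                 (i1 && i2, d1 && d2)
  | Comp t1 t2 => let (i1, d1) := absem t1 in let (i2, d2) := absem t2 in
                 ((i1 && i2) || (d1 && d2), (i1 && d2) || (d1 && i2) || (d1 && d2))
  | IdT => (true, false)
  | DiT => (false, true)
  | Conv t1 => absem t1
  end.

Lemma absem_ok (M : structure V) (H3 : forall x y : carrier M, exists z, z <> x /\ z <> y)
  (t : term V) : var_free t -> forall x y,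
  sem M t x y <-> ((x = y /\ fst (absem t) = true) \/ (x <> y /\ snd (absem t) = true)).
Proof.
  induction t; simpl; intros Hf x y; try contradiction.
  - destruct Hf as [F1 F2]. rewrite IHt1, IHt2 by auto.
    destruct (absem t1) as [i1 d1], (absem t2) as [i2 d2]; simpl.
    destruct i1, d1, i2, d2; simpl; intuition congruence.
  - destruct Hf as [F1 F2].
    setoid_rewrite IHt1; auto. setoid_rewrite IHt2; auto.
    destruct (absem t1) as [i1 d1], (absem t2) as [i2 d2]; simpl.
    split.
    + intros [z Hz]. destruct (classic (x = y)) as [e|ne].
      * left. split; auto.
        destruct i1, i2, d1, d2; simpl in *; intuition congruence.
      * right. split; auto.
        destruct i1, i2, d1, d2; simpl in *; intuition congruence.
    + intros Hc.
      destruct i1, i2, d1, d2; simpl in Hc;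
      first [ exists x; intuition congruence
            | exists y; intuition congruence
            | destruct (H3 x y) as [z [z1 z2]]; exists z; intuition congruence ].
  - intuition congruence.
  - intuition congruence.
  - rewrite IHt by auto. intuition congruence.
Qed.
End T.

Section S.
Variable V : Type.

Lemma transfer (M N : structure V) (Rl : carrier M -> carrier N -> Prop)
  (tot : forall x, exists x', Rl x x') (sur : forall x', exists x, Rl x x')
  (fn : forall x x' y y', Rl x x' -> Rl y y' -> (x = y <-> x' = y'))
  (t : term V)
  (hrel : forall b, occurs V b t -> forall x x' y y', Rl x x' -> Rl y y' ->
            (rel M b x y <-> rel N b x' y')) :
  forall x x' y y', Rl x x' -> Rl y y' -> (sem M t x y <-> sem N t x' y').
Proof.
  induction t; simpl in *; intros x x' y y' Hx Hy.
  - apply hrel; auto.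
  - rewrite IHt1, IHt2 by eauto. tauto.
  - split.
    + intros [z [H1 H2]]. destruct (tot z) as [z' Hz].
      exists z'. rewrite <- IHt1, <- IHt2 by eauto. auto.
    + intros [z' [H1 H2]]. destruct (sur z') as [z Hz].
      exists z. rewrite IHt1, IHt2 by eauto. auto.
  - apply fn; auto.
  - rewrite (fn _ _ _ _ Hx Hy). tauto.
  - apply IHt; auto.
Qed.

Fixpoint vecs {A} (xs : list A) (m : nat) : list (list A) :=
  match m with
  | 0 => [[]]
  | S m => flat_map (fun l => map (fun x => x :: l) xs) (vecs xs m)
  end.

Lemma In_vecs {A} (xs : list A) (l : list A) :
  (forall x, In x l -> In x xs) -> In l (vecs xs (length l)).
Proof.
  induction l as [|x l IH]; simpl; intros H; [auto|].
  apply in_flat_map. exists l. split; auto. apply (in_map (fun y => y :: l)); auto.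
Qed.

Lemma ex_list {A} (d : A) (m : nat) : forall (p : nat -> A -> Prop),
  (forall i, i < m -> exists a, p i a) ->
  exists l, length l = m /\ forall i, i < m -> p i (nth i l d).
Proof.
  induction m as [|m IH]; intros p H.
  - exists []. split; auto. intros; lia.
  - destruct (IH (fun i => p (S i))) as [l [Hl Hp]].
    + intros i Hi. apply H. lia.
    + destruct (H 0) as [a0 Ha0]; [lia|].
      exists (a0 :: l). split; simpl; auto.
      intros [|i] Hi; simpl; auto. apply Hp. lia.
Qed.

Definition mats (n : nat) := vecs (vecs [true; false] n) n.

Definition Nst (m : nat) (a : V) (bl : list (list bool)) : structure V :=
  {| carrier := {k : nat | k < S m};
     carrier_inhabited := inhabits (exist _ 0 (Nat.lt_0_succ m));
     rel := fun b i j => b = a /\ nth (proj1_sig j) (nth (proj1_sig i) bl nil) false = true |}.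

Lemma small_list (M : structure V) : ~ REL_ge5 M ->
  exists l : list (carrier M), NoDup l /\ (forall x, In x l) /\
    exists m, length l = S m /\ m < 4.
Proof.
  intros Hn.
  assert (Hk : forall k, k <= 5 -> (exists l : list (carrier M), NoDup l /\ length l = k) \/
              (exists l : list (carrier M), NoDup l /\ (forall x, In x l) /\ length l < k)).
  { induction k as [|k IH]; intros Hk.
    - left. exists (@nil (carrier M)). split; [constructor|auto].
    - destruct IH as [[l [Hl1 Hl2]]|[l [H1 [H2 H3]]]]; [lia| |].
      + destruct (classic (forall x, In x l)) as [Hc|Hc].
        * right. exists l. split; [auto|split; [auto|lia]].
        * apply not_all_ex_not in Hc. destruct Hc as [x Hx].
          left. exists (x :: l). split; [constructor; auto|simpl; lia].
      + right. exists l. split; [auto|split; [auto|lia]]. }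
  destruct (Hk 5) as [[l [H1 H2]]|[l [H1 [H2 H3]]]]; [lia| |].
  - exfalso. apply Hn. exists l. auto.
  - exists l. split; auto. split; auto.
    destruct (carrier_inhabited V M) as [x0].
    destruct l as [|y l]; [destruct (H2 x0)|].
    exists (length l). simpl in *. split; auto. lia.
Qed.

Lemma small_transfer (M : structure V) (a : V) (t : term V)
  (hocc : forall b, occurs V b t -> b = a)
  (l : list (carrier M)) (Hnd : NoDup l) (Hall : forall x, In x l) (m : nat)
  (Hlen : length l = S m) (bl : list (list bool))
  (Hbl : forall d i j, i < S m -> j < S m ->
     (nth j (nth i bl nil) false = true <-> rel M a (nth i l d) (nth j l d))) :
  forall x y (i j : nat) (pi : i < S m) (pj : j < S m),
  nth_error l i = Some x -> nth_error l j = Some y ->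
  (sem M t x y <-> sem (Nst m a bl) t (exist _ i pi) (exist _ j pj)).
Proof.
  intros x y i j pi pj Hi Hj.
  set (Rl := fun (x : carrier M) (k : carrier (Nst m a bl)) => nth_error l (proj1_sig k) = Some x).
  apply (transfer M (Nst m a bl) Rl); auto.
  - intros z. destruct (In_nth_error l z (Hall z)) as [k Hk].
    assert (k < S m). { rewrite <- Hlen. apply nth_error_Some. congruence. }
    exists (exist _ k H). exact Hk.
  - intros [k pk]. destruct (nth_error l k) as [z|] eqn:E.
    + exists z. exact E.
    + exfalso. apply nth_error_None in E. lia.
  - intros z [k pk] w [k' pk'] H1 H2. unfold Rl in *; simpl in *. split.
    + intros ->. assert (k = k').
      { eapply NoDup_nth_error; eauto. rewrite Hlen; auto. congruence. }
      subst. f_equal. apply le_unique.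
    + intros E. inversion E. subst. congruence.
  - intros b Hb z [k pk] w [k' pk'] H1 H2. unfold Rl in *; simpl in *.
    specialize (hocc b Hb). subst b.
    rewrite (Hbl z k k' pk pk'). rewrite (nth_error_nth _ _ _ H1), (nth_error_nth _ _ _ H2).
    tauto.
Qed.

Lemma mats_ex (M : structure V) (a : V) (l : list (carrier M)) (m : nat) (Hl0 : length l = S m) :
  exists bl, In bl (mats (S m)) /\ forall d i j, i < S m -> j < S m ->
     (nth j (nth i bl nil) false = true <-> rel M a (nth i l d) (nth j l d)).
Proof.
  destruct (classic (inhabited (carrier M))) as [[d0]|Hni];
    [|exfalso; apply Hni; apply carrier_inhabited].
  assert (Hrow : forall i, exists row : list bool, length row = S m /\
     forall j, j < S m -> (nth j row false = true <-> forall d, rel M a (nth i l d) (nth j l d))).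
  { intros i. apply (ex_list false (S m) (fun j b => b = true <-> forall d, rel M a (nth i l d) (nth j l d))).
    intros j _. destruct (classic (forall d, rel M a (nth i l d) (nth j l d))).
    - exists true. tauto.
    - exists false. split; [discriminate|tauto]. }
  destruct (ex_list [] (S m) (fun i row => length row = S m /\
     forall j, j < S m -> (nth j row false = true <-> forall d, rel M a (nth i l d) (nth j l d))))
    as [bl [Hlen Hp]].
  { intros i _. apply Hrow. }
  exists bl. split.
  - unfold mats. rewrite <- Hlen at 2. apply In_vecs.
    intros row Hrow'. apply In_nth with (d := []) in Hrow'. destruct Hrow' as [i [Hi <-]].
    rewrite Hlen in Hi. destruct (Hp i Hi) as [Hl _]. rewrite <- Hl. apply In_vecs.
    intros [|]; simpl; auto.
  - intros d i j Hi Hj. destruct (Hp i Hi) as [_ H]. rewrite H by auto.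
    split; auto. intros Hr d'.
    rewrite !nth_indep with (d := d') (d' := d); auto; lia.
Qed.
End S.

Lemma forall_lt_iff (i j n : nat) (pi : i < n) (pj : j < n) (P : i < n -> j < n -> Prop) :
  (forall pi' pj', P pi' pj') <-> P pi pj.
Proof.
  split; auto. intros H pi' pj'.
  rewrite (le_unique _ _ pi' pi), (le_unique _ _ pj' pj). auto.
Qed.

Lemma three_distinct {V} (M : structure V) : REL_ge5 M ->
  forall x y : carrier M, exists z, z <> x /\ z <> y.
Proof.
  intros [l [Hl Hnd]] x y. apply NNPP. intros Hno.
  assert (Hxy : forall z, z = x \/ z = y).
  { intros z. destruct (classic (z = x)); auto. destruct (classic (z = y)); auto.
    exfalso. apply Hno. eauto. }
  destruct l as [|e1 [|e2 [|e3 l]]]; simpl in Hl; try lia.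
  inversion Hnd as [|? ? N1 Hnd1]; subst. inversion Hnd1 as [|? ? N2 _]; subst.
  simpl in N1, N2.
  destruct (Hxy e1), (Hxy e2), (Hxy e3); subst; intuition congruence.
Qed.

Theorem lemma4p10 (V : Type) (V_finite : exists l : list V, forall a : V, In a l)
  (V_nonempty : inhabited V) :
  finite_quotient (@word_ok V) (@wsim_ge5 V) ->
  finite_quotient (fun t : term V => @conv_free V t /\ @vo V t <= 1) (@sim V (@REL V)).
Proof.
  intros [W [HW HWc]]. destruct V_finite as [Vl HVl]. destruct V_nonempty as [a0].
  apply tests_fin with (L :=
    map (fun a => fun t => occurs V a t) Vl ++
    [fun t => fst (absem V t) = true; fun t => snd (absem V t) = true] ++
    flat_map (fun r => map (fun a => fun t => sim REL_ge5 t (plug r (Var a))) Vl) W ++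
    flat_map (fun m => flat_map (fun a => flat_map (fun bl => flat_map (fun i =>
      map (fun j => fun t => forall (pi : i < S m) (pj : j < S m),
              sem (Nst V m a bl) t (exist _ i pi) (exist _ j pj))
        (seq 0 (S m))) (seq 0 (S m))) (mats (S m))) Vl) (seq 0 4)).
  intros t s [Ct Vt] [Cs Vs] Hag M _ x y.
  assert (Hocc : forall b, occurs V b t <-> occurs V b s).
  { intros b. apply (Hag (fun t => occurs V b t)). apply in_or_app. left.
    apply (in_map (fun a => fun t => occurs V a t)). auto. }
  destruct (classic (REL_ge5 M)) as [H5|H5].
  - destruct (Nat.eq_dec (vo t) 0) as [E|E].
    + assert (Es : vo s = 0).
      { destruct (Nat.eq_dec (vo s) 0) as [E'|E']; auto.
        destruct (vo_occ V s) as [b Hb]; [lia|]. apply Hocc, occ_vo in Hb. lia. }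
      assert (A1 : fst (absem V t) = true <-> fst (absem V s) = true).
      { apply (Hag (fun t => fst (absem V t) = true)). apply in_or_app. right. left. auto. }
      assert (A2 : snd (absem V t) = true <-> snd (absem V s) = true).
      { apply (Hag (fun t => snd (absem V t) = true)). apply in_or_app. right. right. left. auto. }
      rewrite (absem_ok V M (three_distinct M H5) t), (absem_ok V M (three_distinct M H5) s)
        by (apply vo0_vf; auto).
      tauto.
    + destruct (decomp V t Ct) as [w [a [Hw Ht]]]; [lia|].
      destruct (HWc w Hw) as [r [Hr Hwr]].
      assert (Q : sim REL_ge5 t (plug r (Var a)) <-> sim REL_ge5 s (plug r (Var a))).
      { apply (Hag (fun t => sim REL_ge5 t (plug r (Var a)))).
        apply in_or_app. right. apply in_or_app. right. apply in_or_app. left.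
        apply in_flat_map. exists r. split; auto.
        apply (in_map (fun a => fun t => sim REL_ge5 t (plug r (Var a)))). auto. }
      assert (St : sim REL_ge5 t (plug r (Var a))) by (rewrite Ht; apply Hwr).
      assert (Ss := proj1 Q St).
      rewrite (St M H5), (Ss M H5). tauto.
  - destruct (small_list V M H5) as [l [Hnd [Hall [m [Hlen Hm]]]]].
    assert (Ha : exists a, forall b, occurs V b t -> b = a).
    { destruct (classic (exists a, occurs V a t)) as [[a Ha]|Hn].
      - exists a. intros b Hb. symmetry. apply (occ_uniq V a b t); auto.
      - exists a0. intros b Hb. exfalso. eauto. }
    destruct Ha as [a Ha].
    assert (Ha' : forall b, occurs V b s -> b = a) by (intros b Hb; apply Ha, Hocc, Hb).
    destruct (mats_ex V M a l m Hlen) as [bl [Hbl Hblp]].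
    destruct (In_nth_error l x (Hall x)) as [i Hi].
    destruct (In_nth_error l y (Hall y)) as [j Hj].
    assert (pi : i < S m) by (rewrite <- Hlen; apply nth_error_Some; congruence).
    assert (pj : j < S m) by (rewrite <- Hlen; apply nth_error_Some; congruence).
    rewrite (small_transfer V M a t Ha l Hnd Hall m Hlen bl Hblp x y i j pi pj Hi Hj).
    rewrite (small_transfer V M a s Ha' l Hnd Hall m Hlen bl Hblp x y i j pi pj Hi Hj).
    set (Q := fun t => forall (pi : i < S m) (pj : j < S m),
              sem (Nst V m a bl) t (exist _ i pi) (exist _ j pj)).
    assert (HQ : Q t <-> Q s).
    { apply Hag. apply in_or_app. right. apply in_or_app. right. apply in_or_app. right.
      apply in_flat_map. exists m. split; [apply in_seq; lia|].
      apply in_flat_map. exists a. split; auto.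
      apply in_flat_map. exists bl. split; auto.
      apply in_flat_map. exists i. split; [apply in_seq; lia|].
      apply (in_map (fun j => fun t => forall (pi : i < S m) (pj : j < S m),
              sem (Nst V m a bl) t (exist _ i pi) (exist _ j pj))).
      apply in_seq; lia. }
    unfold Q in HQ.
    rewrite !(forall_lt_iff i j (S m) pi pj) in HQ. exact HQ.
Qed.
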